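(* Let $(a_0,\ldots,a_n)$ be a finite sequence of positive integers and $\omega=[a_0,\ldots,a_n,1,1,1,\ldots]$. For every $\varepsilon>0$ there is $m_0>0$ such that for every integer $m\ge m_0$ and every infinite sequence of positive integers $I=(a_{n+m},a_{n+m+1},\ldots)$, writing $$\beta^I=[a_0,\ldots,a_n,\underbrace{1,\ldots,1}_{m-1},a_{n+m},a_{n+m+1},\ldots]$$ (digits $a_0,\ldots,a_n$ in positions $0,\ldots,n$, ones in positions $n+1,\ldots,n+m-1$, and $a_j$ in position $j\ge n+m$), we have $$\sum_{i\ge n+m}\alpha_0(\omega)\cdots\alpha_{i-1}(\omega)\log\frac{1}{\alpha_i(\omega)}<\varepsilon$$ and $$\sum_{i=0}^{n+m-1}\left|\alpha_0(\beta^I)\cdots\alpha_{i-1}(\beta^I)\log\frac{1}{\alpha_i(\beta^I)}-\alpha_0(\omega)\cdots\alpha_{i-1}(\omega)\log\frac{1}{\alpha_i(\omega)}\right|<\varepsilon.$$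
   Context: For positive integers $d_0,d_1,\ldots$, $[d_0,d_1,d_2,\ldots]$ denotes the continued fraction $\cfrac{1}{d_0+\cfrac{1}{d_1+\cfrac{1}{d_2+\cdots}}}$, and for $\beta=[d_0,d_1,\ldots]$ we write $\alpha_j(\beta)=[d_j,d_{j+1},\ldots]$. (An empty product equals $1$.) *)

(* Defs.v *)
From Stdlib Require Import Reals Lra Lia.
From Coquelicot Require Import Coquelicot.
Open Scope R_scope.

Fixpoint cf_fin (d : nat -> nat) (k : nat) : R :=
  match k with
  | O => 0
  | S k' => / (INR (d O) + cf_fin (fun j => d (S j)) k')
  end.

(* Value of the infinite continued fraction [d 0, d 1, d 2, ...]
   (limit of its convergents; it converges for positive digits). *)
Definition cf (d : nat -> nat) : R := real (Lim_seq (fun k => cf_fin d k)).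

Definition alpha (j : nat) (d : nat -> nat) : R := cf (fun k => d (j + k)%nat).

Fixpoint alpha_prod (d : nat -> nat) (i : nat) : R :=
  match i with
  | O => 1
  | S i' => alpha_prod d i' * alpha i' d
  end.

Definition term (d : nat -> nat) (i : nat) : R :=
  alpha_prod d i * ln (/ alpha i d).

Definition omega_digits (a : nat -> nat) (n : nat) (j : nat) : nat :=
  if Nat.leb j n then a j else 1%nat.

(* Digits of beta^I = [a_0,...,a_n, 1 (m-1 times), I 0, I 1, ...],
   where I k plays the role of a_{n+m+k}. *)
Definition beta_digits (a : nat -> nat) (n m : nat) (I : nat -> nat) (j : nat) : nat :=
  if Nat.leb j n then a j
  else if Nat.ltb j (n + m) then 1%nat
  else I (j - (n + m))%nat.

(* Main.v *)
Require Import Defs.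
From Stdlib Require Import Reals Lra Lia.
From Coquelicot Require Import Coquelicot.
Open Scope R_scope.

Definition posd (d : nat -> nat) := forall k, (0 < d k)%nat.

Lemma INR_ge1 (k : nat) : (0 < k)%nat -> 1 <= INR k.
Proof. intro H. apply (le_INR 1). lia. Qed.

Lemma cf_fin_ext d d' K : (forall k, d k = d' k) -> cf_fin d K = cf_fin d' K.
Proof.
  revert d d'; induction K as [|K IH]; intros d d' H; simpl; auto.
  rewrite H, (IH _ (fun j => d' (S j))); auto.
Qed.

Lemma cf_fin_bnd K : forall d, posd d -> 0 <= cf_fin d K <= 1.
Proof.
  induction K as [|K IH]; intros d Hd; simpl; [lra|].
  assert (H1 := INR_ge1 _ (Hd O)).
  assert (H2 := IH (fun j => d (S j)) (fun k => Hd (S k))).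
  split.
  - left; apply Rinv_0_lt_compat; lra.
  - rewrite <- Rinv_1; apply Rinv_le_contravar; lra.
Qed.

Lemma contr2 A B p q : 1 <= A -> 1 <= B -> 0 <= p -> 0 <= q ->
  Rabs (/ (A + / (B + p)) - / (A + / (B + q))) <= / 4 * Rabs (p - q).
Proof.
  intros HA HB Hp Hq.
  assert (E : / (A + / (B + p)) - / (A + / (B + q)) =
     (p - q) * / ((A * (B + p) + 1) * (A * (B + q) + 1))).
  { field; repeat split; try lra; nra. }
  rewrite E, Rabs_mult, Rmult_comm.
  apply Rmult_le_compat_r; [apply Rabs_pos|].
  rewrite Rabs_pos_eq.
  - apply Rinv_le_contravar; [lra|].
    assert (1 <= A * (B + p)) by nra. assert (1 <= A * (B + q)) by nra. nra.
  - assert (1 <= A * (B + p)) by nra. assert (1 <= A * (B + q)) by nra.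
    left; apply Rinv_0_lt_compat; nra.
Qed.

Lemma cf_fin_cauchy j : forall d, posd d -> forall k l, (2*j <= k)%nat -> (2*j <= l)%nat ->
  Rabs (cf_fin d k - cf_fin d l) <= (/4)^j.
Proof.
  induction j as [|j IH]; intros d Hd k l Hk Hl.
  - simpl. destruct (cf_fin_bnd k d Hd); destruct (cf_fin_bnd l d Hd).
    apply Rabs_le; lra.
  - destruct k as [|[|k]]; [lia|lia|]. destruct l as [|[|l]]; [lia|lia|].
    simpl.
    set (h := fun j0 => d (S (S j0))).
    change (fun j0 : nat => d (S (S j0))) with h.
    assert (Hh : posd h) by (intro; apply Hd).
    destruct (cf_fin_bnd k h Hh); destruct (cf_fin_bnd l h Hh).
    eapply Rle_trans; [apply contr2; auto; apply INR_ge1; apply Hd|].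
    change ((/4)^(S j)) with (/4 * (/4)^j); apply Rmult_le_compat_l; [lra|].
    apply IH; auto; lia.
Qed.

Lemma cf_fin_conv d : posd d -> is_lim_seq (cf_fin d) (cf d).
Proof.
  intro Hd.
  assert (Hex : ex_finite_lim_seq (cf_fin d)).
  { apply ex_lim_seq_cauchy_corr. intro eps.
    destruct (pow_lt_1_zero (/4)) with (y := pos eps) as [N HN].
    { rewrite Rabs_pos_eq; lra. } { apply cond_pos. }
    exists (2*N)%nat. intros k l Hk Hl.
    eapply Rle_lt_trans; [apply (cf_fin_cauchy N); auto|].
    specialize (HN N (le_n _)). rewrite Rabs_pos_eq in HN; auto.
    apply pow_le; lra. }
  destruct Hex as [l Hl].
  assert (E : cf d = l).
  { unfold cf. rewrite (is_lim_seq_unique (fun k => cf_fin d k) l Hl). reflexivity. }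
  rewrite E; exact Hl.
Qed.

Lemma cf_ext d d' : (forall k, d k = d' k) -> cf d = cf d'.
Proof.
  intro H. unfold cf. rewrite (Lim_seq_ext _ (cf_fin d')); auto.
  intro; apply cf_fin_ext; auto.
Qed.

Lemma cf_bnd d : posd d -> 0 <= cf d <= 1.
Proof.
  intro Hd. assert (L := cf_fin_conv d Hd).
  split.
  - assert (X := is_lim_seq_le (fun _ => 0) (cf_fin d) 0 (cf d)
       (fun k => proj1 (cf_fin_bnd k d Hd)) (is_lim_seq_const 0) L). exact X.
  - assert (X := is_lim_seq_le (cf_fin d) (fun _ => 1) (cf d) 1
       (fun k => proj2 (cf_fin_bnd k d Hd)) L (is_lim_seq_const 1)). exact X.
Qed.

Lemma cf_rec d : posd d -> cf d = / (INR (d O) + cf (fun j => d (S j))).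
Proof.
  intro Hd.
  assert (Hs : posd (fun j => d (S j))) by (intro; apply Hd).
  assert (L := cf_fin_conv _ Hs).
  assert (H1 := INR_ge1 _ (Hd O)). assert (H2 := cf_bnd _ Hs).
  assert (L2 : is_lim_seq (fun k => / (INR (d O) + cf_fin (fun j => d (S j)) k))
                  (/ (INR (d O) + cf (fun j => d (S j))))).
  { apply (is_lim_seq_inv _ (INR (d O) + cf (fun j => d (S j)))).
    - apply is_lim_seq_plus'; auto. apply is_lim_seq_const.
    - intro E; injection E; lra. }
  assert (L3 := cf_fin_conv d Hd).
  apply is_lim_seq_incr_1 in L3.
  assert (U := is_lim_seq_unique _ _ L2).
  assert (U2 := is_lim_seq_unique (fun k => / (INR (d O) + cf_fin (fun j => d (S j)) k)) _ L3).
  rewrite U in U2. injection U2; auto.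
Qed.

Lemma alpha_rec j d : posd d -> alpha j d = / (INR (d j) + alpha (S j) d).
Proof.
  intro Hd. unfold alpha.
  rewrite cf_rec by (intro; apply Hd).
  rewrite Nat.add_0_r. f_equal. f_equal. apply cf_ext. intro k. f_equal. lia.
Qed.

Lemma alpha_bnd j d : posd d -> 0 < alpha j d <= 1.
Proof.
  intro Hd. rewrite alpha_rec by auto.
  assert (H1 := INR_ge1 _ (Hd j)).
  assert (H2 := cf_bnd (fun k => d (S j + k)%nat) (fun k => Hd _)). unfold alpha.
  split. - apply Rinv_0_lt_compat; lra. - rewrite <- Rinv_1; apply Rinv_le_contravar; lra.
Qed.

Lemma inv_alpha j d : posd d -> / alpha j d = INR (d j) + alpha (S j) d.
Proof. intro Hd. rewrite (alpha_rec j d Hd), Rinv_inv. auto. Qed.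

Lemma alpha_prod_bnd d i : posd d -> 0 <= alpha_prod d i <= 1.
Proof.
  intro Hd. induction i as [|i IH]; simpl; [lra|].
  destruct (alpha_bnd i d Hd). nra.
Qed.

Lemma ln_le_sub1 t : 0 < t -> ln t <= t - 1.
Proof. intro H. assert (X := exp_ineq1_le (ln t)). rewrite exp_ln in X; lra. Qed.

Lemma L_bnd j d : posd d -> 0 <= ln (/ alpha j d) <= INR (d j).
Proof.
  intro Hd. destruct (alpha_bnd j d Hd). destruct (alpha_bnd (S j) d Hd).
  assert (1 <= / alpha j d) by (rewrite <- Rinv_1; apply Rinv_le_contravar; lra).
  split.
  - rewrite <- ln_1. apply ln_le; lra.
  - eapply Rle_trans; [apply ln_le_sub1; lra|]. rewrite inv_alpha by auto. lra.
Qed.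

Lemma L_lip x y D : 0 < x -> 0 < y -> / x <= D -> / y <= D ->
  Rabs (ln (/ x) - ln (/ y)) <= Rabs (x - y) * D.
Proof.
  intros Hx Hy HxD HyD.
  assert (Hx' : 0 < / x) by (apply Rinv_0_lt_compat; lra).
  assert (Hy' : 0 < / y) by (apply Rinv_0_lt_compat; lra).
  assert (E1 : ln (/ x) - ln (/ y) = ln (y * / x)).
  { rewrite ln_mult by lra. rewrite (ln_Rinv y) by lra. ring. }
  assert (E2 : ln (/ y) - ln (/ x) = ln (x * / y)).
  { rewrite ln_mult by lra. rewrite (ln_Rinv x) by lra. ring. }
  assert (A1 : ln (y * / x) <= Rabs (x - y) * D).
  { eapply Rle_trans; [apply ln_le_sub1; nra|].
    replace (y * / x - 1) with ((y - x) * / x) by (field; lra).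
    assert (y - x <= Rabs (x - y)) by (rewrite Rabs_minus_sym; apply Rle_abs).
    assert (0 <= Rabs (x - y)) by apply Rabs_pos. nra. }
  assert (A2 : ln (x * / y) <= Rabs (x - y) * D).
  { eapply Rle_trans; [apply ln_le_sub1; nra|].
    replace (x * / y - 1) with ((x - y) * / y) by (field; lra).
    assert (x - y <= Rabs (x - y)) by apply Rle_abs.
    assert (0 <= Rabs (x - y)) by apply Rabs_pos. nra. }
  apply Rabs_le; lra.
Qed.

Lemma prod_diff a b x y : 0 <= x <= 1 -> 0 <= b <= 1 ->
  Rabs (a*x - b*y) <= Rabs (a - b) + Rabs (x - y).
Proof.
  intros Hx Hb. replace (a*x - b*y) with ((a-b)*x + b*(x-y)) by ring.
  eapply Rle_trans; [apply Rabs_triang|]. rewrite !Rabs_mult.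
  rewrite (Rabs_pos_eq x), (Rabs_pos_eq b) by lra.
  assert (0 <= Rabs (a - b)) by apply Rabs_pos.
  assert (0 <= Rabs (x - y)) by apply Rabs_pos. nra.
Qed.

Lemma term_diffA Pa Pb La Lb : 0 <= La -> 0 <= Pb <= 1 ->
  Rabs (Pa*La - Pb*Lb) <= Rabs (Pa-Pb) * La + Rabs (La - Lb).
Proof.
  intros HL HP. replace (Pa*La - Pb*Lb) with ((Pa-Pb)*La + Pb*(La-Lb)) by ring.
  eapply Rle_trans; [apply Rabs_triang|]. rewrite !Rabs_mult.
  rewrite (Rabs_pos_eq La), (Rabs_pos_eq Pb) by lra.
  assert (0 <= Rabs (La - Lb)) by apply Rabs_pos. nra.
Qed.

Lemma term_diffB u v : 0 <= u -> 0 <= v -> Rabs (u - v) <= u + v.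
Proof. intros. apply Rabs_le; lra. Qed.

Lemma pow_le1 s k : 0 <= s <= 1 -> s ^ k <= 1.
Proof. intro H. rewrite <- (pow1 k). apply pow_incr; lra. Qed.

Lemma pow_mono s p q : 0 <= s <= 1 -> (p <= q)%nat -> s ^ q <= s ^ p.
Proof.
  intros Hs Hpq. replace q with (p + (q - p))%nat by lia. rewrite pow_add.
  assert (0 <= s ^ p) by (apply pow_le; lra).
  assert (s ^ (q - p) <= 1) by (apply pow_le1; lra).
  assert (0 <= s ^ (q - p)) by (apply pow_le; lra). nra.
Qed.

Lemma rev_geom M : sum_f_R0 (fun k => (9/10) ^ (M - k)) M <= 10.
Proof.
  induction M as [|M IH]; [simpl; lra|].
  change (sum_f_R0 (fun k => (9/10)^(S M - k)) (S M)) with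
    (sum_f_R0 (fun k => (9/10)^(S M - k)) M + (9/10)^(S M - S M)).
  rewrite Nat.sub_diag, pow_O.
  rewrite (sum_eq _ (fun k => (9/10) ^ (M - k) * (9/10))).
  - rewrite <- scal_sum. lra.
  - intros i Hi. replace (S M - i)%nat with (S (M - i)) by lia. simpl. ring.
Qed.

Lemma posw n a : (forall k, (k <= n)%nat -> (0 < a k)%nat) -> posd (omega_digits a n).
Proof.
  intros Ha k. unfold omega_digits. destruct (Nat.leb k n) eqn:E.
  - apply Nat.leb_le in E; auto. - lia.
Qed.

Lemma posb n m a I : (forall k, (k <= n)%nat -> (0 < a k)%nat) -> (forall k, (0 < I k)%nat) ->
  posd (beta_digits a n m I).
Proof.
  intros Ha HI k. unfold beta_digits. destruct (Nat.leb k n) eqn:E.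
  - apply Nat.leb_le in E; auto. - destruct (Nat.ltb k (n+m)); auto.
Qed.

Lemma same_dig n m a I j : (j < n + m)%nat -> beta_digits a n m I j = omega_digits a n j.
Proof.
  intro H. unfold beta_digits, omega_digits. destruct (Nat.leb j n); auto.
  destruct (Nat.ltb j (n+m)) eqn:E; auto. apply Nat.ltb_ge in E. lia.
Qed.

Lemma w1 n a j : (n < j)%nat -> omega_digits a n j = 1%nat.
Proof.
  intro H. unfold omega_digits. destruct (Nat.leb j n) eqn:E; auto.
  apply Nat.leb_le in E; lia.
Qed.

Lemma w_le n a j : (j <= n)%nat -> omega_digits a n j = a j.
Proof.
  intro H. unfold omega_digits. destruct (Nat.leb j n) eqn:E; auto.
  apply Nat.leb_gt in E; lia.
Qed.

Lemma aprodS d i : alpha_prod d (S i) = alpha_prod d i * alpha i d.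
Proof. reflexivity. Qed.

Theorem mainTheorem11 :
  forall (n : nat) (a : nat -> nat),
    (forall k : nat, (k <= n)%nat -> (0 < a k)%nat) ->
    forall eps : R, 0 < eps ->
    exists m0 : nat, (0 < m0)%nat /\
      forall m : nat, (m0 <= m)%nat ->
      forall I : nat -> nat, (forall k : nat, (0 < I k)%nat) ->
        ex_series (fun k => term (omega_digits a n) (n + m + k)%nat) /\
        Series (fun k => term (omega_digits a n) (n + m + k)%nat) < eps /\
        sum_f_R0 (fun i => Rabs (term (beta_digits a n m I) i
                                 - term (omega_digits a n) i))
                 (n + m - 1)%nat < eps.
Proof.
  intros n a Ha eps Heps.
  assert (Hw := posw n a Ha).
  set (w := omega_digits a n) in *.
  set (c := alpha (S n) w).
  assert (Hct : forall j, (n < j)%nat -> alpha j w = c).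
  { intros j Hj. unfold c, alpha. apply cf_ext. intro k. unfold w. rewrite !w1 by lia. auto. }
  assert (Hc : / 2 <= c <= 2 / 3).
  { assert (E : c = / (1 + c)).
    { unfold c at 1. rewrite alpha_rec by auto. unfold w at 1. rewrite w1 by lia.
      rewrite (Hct (S (S n))) by lia. simpl. auto. }
    destruct (alpha_bnd (S n) w Hw) as [H1 H2]. fold c in H1, H2.
    assert (E2 : c * (1 + c) = 1) by (rewrite E at 1; field; lra).
    split; nra. }
  assert (Hwp : forall t, alpha_prod w (S n + t) = alpha_prod w (S n) * c ^ t).
  { induction t as [|t IH]. - rewrite Nat.add_0_r. simpl. ring.
    - replace (S n + S t)%nat with (S (S n + t)) by lia. rewrite aprodS.
      rewrite IH, Hct by lia. simpl. ring. }
  set (Cst := sum_f_R0 (fun i => (INR n + 1) * INR (a i) + 1) n).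
  assert (HCst : 0 <= Cst).
  { unfold Cst. apply cond_pos_sum. intro i. assert (0 <= INR n) by apply pos_INR.
    assert (0 <= INR (a i)) by apply pos_INR. nra. }
  set (Ktot := Cst + 10 * (INR n + 5) + 3).
  assert (HK : 3 <= Ktot) by (unfold Ktot; assert (0 <= INR n) by apply pos_INR; lra).
  destruct (pow_lt_1_zero (9/10)) with (y := eps / Ktot) as [N0 HN0].
  { rewrite Rabs_pos_eq; lra. } { apply Rdiv_lt_0_compat; lra. }
  exists (N0 + 2)%nat. split; [lia|]. intros m Hm I HI.
  assert (Hs : Ktot * (9/10) ^ (m - 2) < eps).
  { specialize (HN0 (m - 2)%nat ltac:(lia)). rewrite Rabs_pos_eq in HN0 by (apply pow_le; lra).
    apply (Rmult_lt_compat_l Ktot) in HN0; [|lra].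
    replace (Ktot * (eps / Ktot)) with eps in HN0 by (field; lra). exact HN0. }
  assert (Hs0 : 0 <= (9/10) ^ (m - 2)) by (apply pow_le; lra).
  set (G := alpha_prod w (S n) * c ^ (m - 1) * ln (/ c)).
  assert (Hser : is_series (fun k => term w (n + m + k)) (G * / (1 - c))).
  { apply (is_series_ext (fun k => G * c ^ k)).
    - intro k. unfold term. rewrite (Hct (n + m + k)%nat) by lia.
      replace (n + m + k)%nat with (S n + (m - 1 + k))%nat by lia.
      rewrite Hwp, pow_add; unfold G. match goal with |- ?x = ?y => change (@eq R x y) end; ring.
    - apply (is_series_scal_l G (fun k => c ^ k)); apply is_series_geom.
      rewrite Rabs_pos_eq; lra. }
  split; [|split].
  3: {
  assert (Hm2 : (2 <= m)%nat) by lia.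
  assert (Hb := posb n m a I Ha HI).
  set (b := beta_digits a n m I) in *.
  assert (Hsame : forall j, (j < n + m)%nat -> b j = w j) by (intros; apply same_dig; auto).
  assert (Hw1 : forall j, (n < j)%nat -> w j = 1%nat) by (intros; apply w1; auto).
  assert (HxR : forall j, (j < n+m)%nat -> alpha j b = / (INR (w j) + alpha (S j) b)).
  { intros j Hj. rewrite alpha_rec by auto. rewrite Hsame; auto. }
  assert (HyR : forall j, alpha j w = / (INR (w j) + alpha (S j) w)) by (intro; apply alpha_rec; auto).
  assert (Hx23 : forall j, (n < j)%nat -> (S j < n + m)%nat -> alpha j b <= 2/3).
  { intros j H1 H2. rewrite HxR by lia. rewrite Hw1 by lia.
    rewrite HxR by lia. rewrite Hw1 by lia. change (INR 1) with 1.
    destruct (alpha_bnd (S (S j)) b Hb).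
    assert (0 < / (1 + alpha (S (S j)) b)) by (apply Rinv_0_lt_compat; simpl; lra).
    assert (/ 2 <= / (1 + alpha (S (S j)) b)) by (apply Rinv_le_contravar; simpl; lra).
    replace (2/3) with (/ (1 + /2)) by field. apply Rinv_le_contravar; simpl; lra. }
  assert (Hy23 : forall j, (n < j)%nat -> alpha j w <= 2/3) by (intros; rewrite Hct by lia; lra).
  assert (He : forall j, (j < n+m)%nat -> Rabs (alpha j b - alpha j w) =
             Rabs (alpha (S j) b - alpha (S j) w) * alpha j b * alpha j w).
  { intros j Hj.
    destruct (alpha_bnd (S j) b Hb), (alpha_bnd (S j) w Hw), (alpha_bnd j b Hb), (alpha_bnd j w Hw).
    assert (HD : 1 <= INR (w j)) by (apply INR_ge1; apply Hw).
    assert (E : alpha j b - alpha j w = (alpha (S j) w - alpha (S j) b) * alpha j b * alpha j w).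
    { rewrite (HxR j Hj), (HyR j). field. split; lra. }
    rewrite E, !Rabs_mult, Rabs_minus_sym, (Rabs_pos_eq (alpha j b)), (Rabs_pos_eq (alpha j w)) by lra.
    reflexivity. }
  assert (P4 : (9/10)^4 = 6561/10000) by (simpl; field).
  assert (P2 : (9/10)^2 = 81/100) by (simpl; field).
  assert (F7 : forall t j, (j + t = n + m - 1)%nat -> (n < j)%nat ->
             Rabs (alpha j b - alpha j w) <= (9/10)^(4*t)).
  { induction t as [|t IH]; intros j Hj1 Hj2.
    - destruct (alpha_bnd j b Hb), (alpha_bnd j w Hw). simpl. apply Rabs_le; lra.
    - rewrite He by lia. specialize (IH (S j) ltac:(lia) ltac:(lia)).
      assert (alpha j b <= 2/3) by (apply Hx23; lia). assert (alpha j w <= 2/3) by (apply Hy23; lia).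
      destruct (alpha_bnd j b Hb), (alpha_bnd j w Hw).
      replace (4 * S t)%nat with (4 * t + 4)%nat by lia. rewrite pow_add, P4.
      assert (0 <= Rabs (alpha (S j) b - alpha (S j) w)) by apply Rabs_pos.
      assert (alpha j b * alpha j w <= 4/9) by nra.
      assert (0 <= alpha j b * alpha j w) by nra.
      rewrite Rmult_assoc.
      apply Rle_trans with ((9/10)^(4*t) * (4/9)); [apply Rmult_le_compat; lra|].
      assert (0 <= (9/10)^(4*t)) by (apply pow_le; lra). lra. }
  assert (F8 : forall j, (j <= n)%nat -> Rabs (alpha j b - alpha j w) <= (9/10)^(4*(m-2))).
  { assert (G8 : forall t j, (j + t = S n)%nat -> Rabs (alpha j b - alpha j w) <= (9/10)^(4*(m-2))).
    { induction t as [|t IH]; intros j Hj.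
      - apply F7; lia.
      - rewrite He by lia. specialize (IH (S j) ltac:(lia)).
        destruct (alpha_bnd j b Hb), (alpha_bnd j w Hw).
        assert (0 <= Rabs (alpha (S j) b - alpha (S j) w)) by apply Rabs_pos.
        assert (alpha j b * alpha j w <= 1) by nra.
        assert (0 <= alpha j b * alpha j w) by nra.
        rewrite Rmult_assoc.
        apply Rle_trans with (Rabs (alpha (S j) b - alpha (S j) w) * 1); [|lra].
        apply Rmult_le_compat_l; lra. }
    intros j Hj. apply (G8 (S n - j)%nat); lia. }
  assert (F9a : forall i, (i <= S n)%nat ->
      Rabs (alpha_prod b i - alpha_prod w i) <= INR i * (9/10)^(4*(m-2))).
  { induction i as [|i IH]; intro Hi.
    - simpl. replace (1 - 1) with 0 by ring. rewrite Rabs_R0. lra.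
    - rewrite !aprodS. eapply Rle_trans.
      + apply prod_diff; [destruct (alpha_bnd i b Hb); lra | apply alpha_prod_bnd; auto].
      + rewrite S_INR. specialize (IH ltac:(lia)). assert (X := F8 i ltac:(lia)). lra. }
  assert (F9b : forall t, (S n + t <= n + m - 1)%nat ->
      Rabs (alpha_prod b (S n + t) - alpha_prod w (S n + t)) <= (INR n + 3) * (9/10)^(4*(m-2-t))).
  { induction t as [|t IH]; intro Ht.
    - rewrite Nat.add_0_r, Nat.sub_0_r. eapply Rle_trans; [apply F9a; lia|].
      rewrite S_INR. assert (0 <= (9/10)^(4*(m-2))) by (apply pow_le; lra). nra.
    - replace (S n + S t)%nat with (S (S n + t)) by lia. rewrite !aprodS. eapply Rle_trans.
      + apply prod_diff; [destruct (alpha_bnd (S n + t) b Hb); lra | apply alpha_prod_bnd; auto].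
      + specialize (IH ltac:(lia)). assert (X := F7 (m-2-t)%nat (S n + t)%nat ltac:(lia) ltac:(lia)).
        replace (4 * (m - 2 - t))%nat with (4 * (m - 2 - S t) + 4)%nat in IH, X by lia.
        rewrite pow_add, P4 in IH, X.
        assert (0 <= (9/10)^(4*(m-2-S t))) by (apply pow_le; lra).
        assert (0 <= INR n) by apply pos_INR. nra. }
  assert (Pb : forall t, (S n + t <= n + m - 1)%nat -> alpha_prod b (S n + t) <= (9/10)^(2*t)).
  { induction t as [|t IH]; intro Ht.
    - rewrite Nat.add_0_r, Nat.mul_0_r, pow_O. apply alpha_prod_bnd; auto.
    - replace (S n + S t)%nat with (S (S n + t)) by lia. rewrite aprodS.
      specialize (IH ltac:(lia)). assert (X := Hx23 (S n + t)%nat ltac:(lia) ltac:(lia)).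
      destruct (alpha_bnd (S n + t) b Hb). destruct (alpha_prod_bnd b (S n + t) Hb).
      replace (2 * S t)%nat with (2 * t + 2)%nat by lia. rewrite pow_add, P2.
      apply Rle_trans with ((9/10)^(2*t) * (2/3)); [apply Rmult_le_compat; lra|].
      assert (0 <= (9/10)^(2*t)) by (apply pow_le; lra). lra. }
  assert (Pw : forall t, (S n + t <= n + m - 1)%nat -> alpha_prod w (S n + t) <= (9/10)^(2*t)).
  { induction t as [|t IH]; intro Ht.
    - rewrite Nat.add_0_r, Nat.mul_0_r, pow_O. apply alpha_prod_bnd; auto.
    - replace (S n + S t)%nat with (S (S n + t)) by lia. rewrite aprodS.
      specialize (IH ltac:(lia)). assert (X := Hy23 (S n + t)%nat ltac:(lia)).
      destruct (alpha_bnd (S n + t) w Hw). destruct (alpha_prod_bnd w (S n + t) Hw).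
      replace (2 * S t)%nat with (2 * t + 2)%nat by lia. rewrite pow_add, P2.
      apply Rle_trans with ((9/10)^(2*t) * (2/3)); [apply Rmult_le_compat; lra|].
      assert (0 <= (9/10)^(2*t)) by (apply pow_le; lra). lra. }
  assert (D1 : forall i, (i <= n)%nat -> Rabs (term b i - term w i) <=
              ((INR n + 1) * INR (a i) + 1) * (9/10)^(4*(m-2))).
  { intros i Hi. unfold term.
    assert (Ebi : b i = a i) by (rewrite Hsame by lia; apply w_le; auto).
    assert (Ewi : w i = a i) by (apply w_le; auto).
    destruct (L_bnd i b Hb) as [HL1 HL2]. rewrite Ebi in HL2.
    eapply Rle_trans; [apply term_diffA; [auto | apply alpha_prod_bnd; auto]|].
    set (Q := (9/10)^(4*(m-2))). assert (0 <= Q) by (apply pow_le; lra).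
    assert (A1 : Rabs (alpha_prod b i - alpha_prod w i) <= INR n * Q).
    { eapply Rle_trans; [apply F9a; lia|]. apply Rmult_le_compat_r; auto. apply le_INR; auto. }
    assert (A2 : Rabs (ln (/ alpha i b) - ln (/ alpha i w)) <= Q * (INR (a i) + 1)).
    { destruct (alpha_bnd i b Hb), (alpha_bnd i w Hw), (alpha_bnd (S i) b Hb), (alpha_bnd (S i) w Hw).
      eapply Rle_trans; [apply (L_lip _ _ (INR (a i) + 1)); auto|].
      - rewrite inv_alpha, Ebi by auto. lra.
      - rewrite inv_alpha, Ewi by auto. lra.
      - apply Rmult_le_compat_r; [assert (0 <= INR (a i)) by apply pos_INR; lra|]. apply F8; auto. }
    assert (A3 : Rabs (alpha_prod b i - alpha_prod w i) * ln (/ alpha i b) <= INR n * Q * INR (a i)).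
    { apply Rmult_le_compat; auto. apply Rabs_pos. }
    lra. }
  assert (D2 : forall k, (k <= m - 2)%nat -> Rabs (term b (S n + k) - term w (S n + k)) <=
              (9/10)^(m-2-k) * ((INR n + 5) * (9/10)^(m-2))).
  { intros k Hk. set (i := (S n + k)%nat).
    assert (Ebi : b i = 1%nat) by (unfold i; rewrite Hsame by lia; apply Hw1; lia).
    assert (Ewi : w i = 1%nat) by (apply Hw1; unfold i; lia).
    destruct (L_bnd i b Hb) as [HL1 HL2]. rewrite Ebi in HL2. simpl in HL2.
    destruct (L_bnd i w Hw) as [HL3 HL4]. rewrite Ewi in HL4. simpl in HL4.
    replace ((9/10)^(m-2-k) * ((INR n + 5) * (9/10)^(m-2))) with ((INR n + 5) * (9/10)^(m-2-k + (m-2))) by (rewrite pow_add; ring). assert (0 <= INR n) by apply pos_INR.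
    unfold term.
    destruct (Compare_dec.le_lt_dec k (2 * (m - 2 - k))) as [Hc1|Hc1].
    - eapply Rle_trans; [apply term_diffA; [auto | apply alpha_prod_bnd; auto]|].
      set (Q := (9/10)^(4*(m-2-k))). assert (0 <= Q) by (apply pow_le; lra).
      assert (A1 : Rabs (alpha_prod b i - alpha_prod w i) <= (INR n + 3) * Q) by (apply F9b; unfold i; lia).
      assert (A2 : Rabs (ln (/ alpha i b) - ln (/ alpha i w)) <= Q * 2).
      { destruct (alpha_bnd i b Hb), (alpha_bnd i w Hw), (alpha_bnd (S i) b Hb), (alpha_bnd (S i) w Hw).
        eapply Rle_trans; [apply (L_lip _ _ 2); auto|].
        - rewrite inv_alpha, Ebi by auto. simpl; lra.
        - rewrite inv_alpha, Ewi by auto. simpl; lra.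
        - apply Rmult_le_compat_r; [lra|]. apply F7; unfold i; lia. }
      assert (A3 : Rabs (alpha_prod b i - alpha_prod w i) * ln (/ alpha i b) <= (INR n + 3) * Q * 1).
      { apply Rmult_le_compat; auto. apply Rabs_pos. }
      assert (A4 : Q <= (9/10)^(m - 2 - k + (m - 2))) by (apply pow_mono; [lra|lia]).
      nra.
    - eapply Rle_trans; [apply term_diffB|].
      + apply Rmult_le_pos; auto. apply alpha_prod_bnd; auto.
      + apply Rmult_le_pos; auto. apply alpha_prod_bnd; auto.
      + assert (A1 := Pb k ltac:(lia)). assert (A2 := Pw k ltac:(lia)). fold i in A1, A2.
        destruct (alpha_prod_bnd b i Hb), (alpha_prod_bnd w i Hw).
        assert (A4 : (9/10)^(2*k) <= (9/10)^(m - 2 - k + (m - 2))) by (apply pow_mono; [lra|lia]).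
        assert (0 <= (9/10)^(m - 2 - k + (m - 2))) by (apply pow_le; lra).
        nra. }
  rewrite (tech2 _ n (n + m - 1)) by lia.
  replace (n + m - 1 - S n)%nat with (m - 2)%nat by lia.
  assert (S1 : sum_f_R0 (fun i => Rabs (term b i - term w i)) n <= Cst * (9/10)^(4*(m-2))).
  { eapply Rle_trans; [apply sum_Rle; intros; apply D1; lia|].
    rewrite <- scal_sum. unfold Cst. lra. }
  assert (S2 : sum_f_R0 (fun k => Rabs (term b (S n + k) - term w (S n + k))) (m - 2)
               <= (INR n + 5) * (9/10)^(m-2) * 10).
  { eapply Rle_trans; [apply sum_Rle; intros; apply D2; lia|].
    rewrite <- scal_sum. assert (X := rev_geom (m - 2)).
    assert (0 <= (INR n + 5) * (9/10)^(m-2)) by (assert (0 <= INR n) by apply pos_INR; nra).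
    nra. }
  assert (S3 : (9/10)^(4*(m-2)) <= (9/10)^(m-2)) by (apply pow_mono; [lra|lia]).
  unfold Ktot in Hs. nra. }
  - eexists; exact Hser.
  - rewrite (is_series_unique _ _ Hser).
    assert (HL : 0 <= ln (/ c) <= 1).
    { split. - rewrite <- ln_1; apply ln_le; [lra|]. rewrite <- Rinv_1; apply Rinv_le_contravar; lra.
      - eapply Rle_trans; [apply ln_le_sub1; apply Rinv_0_lt_compat; lra|].
        assert (/ c <= 2). { replace 2 with (/ / 2) by (field). apply Rinv_le_contravar; lra. }
        lra. }
    destruct (alpha_prod_bnd w (S n) Hw).
    assert (Hcm : c ^ (m - 1) <= (9/10) ^ (m - 2)).
    { eapply Rle_trans. apply (pow_incr c (81/100)); lra.
      replace (81/100) with ((9/10)^2) by (simpl; field). rewrite <- pow_mult.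
      apply pow_mono; [lra|lia]. }
    assert (0 <= c ^ (m - 1)) by (apply pow_le; lra).
    assert (HG : 0 <= G <= (9/10) ^ (m - 2)).
    { unfold G. split. - apply Rmult_le_pos; [apply Rmult_le_pos|]; lra.
      - assert (alpha_prod w (S n) * c ^ (m - 1) <= c ^ (m - 1)) by nra. nra. }
    assert (/ (1 - c) <= 3).
    { replace 3 with (/ / 3) by field. apply Rinv_le_contravar; lra. }
    assert (0 <= / (1 - c)) by (left; apply Rinv_0_lt_compat; lra).
    assert (G * / (1 - c) <= 3 * (9/10) ^ (m - 2)) by nra.
    nra.
Qed.
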